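(* Let $k$ be a positive integer and let $G$ be a finite, simple, undirected, connected graph of order at least $4$. (a) If $G$ has a twin equivalence class of cardinality at least $4$, then $O_{R,k}(G)=\mathcal{B}$ for all $k$. (b) If $G$ has two distinct twin equivalence classes of cardinality $3$, then $O_{R,k}(G)=\mathcal{B}$ for all $k$.
   Context: Two vertices $u,w$ of $G$ are twins if $N(u)-\{w\}=N(w)-\{u\}$, where $N(v)$ is the open neighborhood of $v$; this is an equivalence relation on $V(G)$ whose classes are the twin equivalence classes. $d(x,y)$ is the shortest-path distance and $d_k(x,y)=\min\{d(x,y),k+1\}$. A set $S\subseteq V(G)$ is a distance-$k$ resolving set if for all distinct $x,y$ some $z\in S$ has $d_k(x,z)\ne d_k(y,z)$. In the Maker-Breaker distance-$k$ resolving game on $G$, Maker and Breaker alternately select a not-yet-chosen vertex; Maker wins if his selected vertices form a distance-$k$ resolving set, Breaker wins otherwise. $O_{R,k}(G)=\mathcal{M}$ if Maker has a winning strategy whether he moves first or second, $\mathcal{B}$ if Breaker has a winning strategy whether she moves first or second, and $\mathcal{N}$ if the first player has a winning strategy. *)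

(* Defs.v *)
From mathcomp Require Import all_boot.
Set Implicit Arguments. Unset Strict Implicit. Unset Printing Implicit Defensive.

Section Graph.
Variables (T : finType) (e : rel T).

Definition nbhd (v : T) : {set T} := [set y | e v y].

Definition twins (u w : T) : bool := (nbhd u :\ w) == (nbhd w :\ u).

Definition twin_class (u : T) : {set T} := [set w | twins u w].

Fixpoint ball (n : nat) (x : T) : {set T} :=
  match n with
  | 0 => [set x]
  | n'.+1 => ball n' x :|: [set y | [exists z in ball n' x, e z y]]
  end.

(* shortest-path distance: least n with y in ball n x
   (for a connected graph this is < #|T|) *)
Definition dist (x y : T) : nat := find (fun n => y \in ball n x) (iota 0 #|T|).

Definition distk (k : nat) (x y : T) : nat := minn (dist x y) k.+1.

Definition resolving (k : nat) (S : {set T}) : bool :=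
  [forall x, forall y, (x != y) ==> [exists z in S, distk k x z != distk k y z]].

(* The game is played until every vertex is
   chosen; Maker wins iff his final set is distance-k resolving.  The fuel n
   bounds the number of remaining moves (#|T| suffices from the start). *)
Fixpoint maker_wins (k n : nat) (M B : {set T}) (makerTurn : bool) : bool :=
  match n with
  | 0 => resolving k M
  | n'.+1 =>
    let free := ~: (M :|: B) in
    if free == set0 then resolving k M
    else if makerTurn then [exists v in free, maker_wins k n' (v |: M) B false]
    else [forall v in free, maker_wins k n' M (v |: B) true]
  end.

Fixpoint breaker_wins (k n : nat) (M B : {set T}) (makerTurn : bool) : bool :=
  match n with
  | 0 => ~~ resolving k M
  | n'.+1 =>
    let free := ~: (M :|: B) in
    if free == set0 then ~~ resolving k M
    else if makerTurn then [forall v in free, breaker_wins k n' (v |: M) B false]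
    else [exists v in free, breaker_wins k n' M (v |: B) true]
  end.

Definition maker_wins_first k := maker_wins k #|T| set0 set0 true.
Definition maker_wins_second k := maker_wins k #|T| set0 set0 false.
Definition breaker_wins_first k := breaker_wins k #|T| set0 set0 false.
Definition breaker_wins_second k := breaker_wins k #|T| set0 set0 true.

End Graph.

Inductive outcome := Outcome_M | Outcome_B | Outcome_N | Outcome_P.

Definition outcome_Rk (T : finType) (e : rel T) (k : nat) : outcome :=
  if maker_wins_first e k && maker_wins_second e k then Outcome_M
  else if breaker_wins_first e k && breaker_wins_second e k then Outcome_B
  else if maker_wins_first e k && breaker_wins_first e k then Outcome_N
  else Outcome_P.

(* Main.v *)
Require Import Defs.
From mathcomp Require Import all_boot zify.
Set Implicit Arguments. Unset Strict Implicit. Unset Printing Implicit Defensive.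

Definition freeS (T : finType) (M B : {set T}) := ~: (M :|: B).

Lemma bw_mw (T : finType) (e : rel T) k n M B t :
  breaker_wins e k n M B t = ~~ maker_wins e k n M B t.
Proof.
elim: n M B t => [//|n IH] M B t /=. case: ifP => _ //. case: t.
- rewrite negb_exists. apply: eq_forallb => v. rewrite IH. by case: (v \in _).
- rewrite negb_forall. apply: eq_existsb => v. rewrite IH. by case: (v \in _).
Qed.

Lemma twinsP (T : finType) (e : rel T) v w :
  reflect (forall z, (z != w) && e v z = (z != v) && e w z) (twins e v w).
Proof.
apply: (iffP eqP) => [H z | H].
- by move/setP: H => /(_ z); rewrite !inE.
- by apply/setP => z; rewrite !inE; exact: H.
Qed.

Lemma twins_sym (T : finType) (e : rel T) x y : twins e x y = twins e y x.
Proof. by rewrite /twins eq_sym. Qed.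

Lemma ball_center (T : finType) (e : rel T) n x : x \in ball e n x.
Proof. elim: n => [|n IH] /=; first by rewrite inE. by rewrite in_setU IH. Qed.

Lemma ball_tw1 (T : finType) (e : rel T) x y : twins e x y ->
  forall n z, z != x -> z != y -> z \in ball e n x -> z \in ball e n y.
Proof.
move/twinsP => Htw; elim=> [|n IH] z zx zy /=.
- by rewrite !inE (negbTE zx).
rewrite !in_setU => /orP [/(IH _ zx zy) -> // |].
rewrite inE => /existsP [w /andP [wx ewz]].
apply/orP; right; rewrite inE; apply/existsP.
case: (w =P x) => [Ewx|nwx].
- exists y; rewrite ball_center /=.
  have := Htw z; rewrite zy zx -Ewx ewz /=. by move=> <-.
case: (w =P y) => [Ewy|nwy].
- by exists y; rewrite ball_center -Ewy.
exists w; rewrite ewz andbT; apply: IH => //; apply/eqP => //.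
Qed.

Lemma ball_tw (T : finType) (e : rel T) x y n z : twins e x y ->
  z != x -> z != y -> (z \in ball e n x) = (z \in ball e n y).
Proof.
move=> H zx zy; apply/idP/idP; first exact: ball_tw1.
by apply: ball_tw1 => //; rewrite twins_sym.
Qed.

Lemma resolving_twins (T : finType) (e : rel T) k M x y :
  resolving e k M -> x != y -> twins e x y -> (x \in M) || (y \in M).
Proof.
move=> /forallP /(_ x) /forallP /(_ y) H xy tw.
move: H; rewrite xy /= => /existsP [z /andP [zM]].
case: (z =P x) => [<-|zx]; first by rewrite zM.
case: (z =P y) => [<-|zy]; first by rewrite zM orbT.
rewrite /distk /dist.
have -> : find (fun n => z \in ball e n x) (iota 0 #|T|) =
          find (fun n => z \in ball e n y) (iota 0 #|T|).
  apply: eq_find => n; apply: ball_tw => //; apply/eqP => //.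
by rewrite eqxx.
Qed.

Lemma twins_trans (T : finType) (e : rel T) u a b :
  symmetric e -> irreflexive e ->
  twins e u a -> twins e u b -> twins e a b.
Proof.
move=> esym eirr.
case: (a =P b) => [<- _ _|ab]; first by rewrite /twins eqxx.
case: (u =P a) => [<- //|ua].
case: (u =P b) => [<- Hua _|ub]; first by rewrite twins_sym.
move=> /twinsP Ha /twinsP Hb; apply/twinsP => z.
case: (z =P b) => [->|zb].
  by rewrite eirr andbF.
case: (z =P a) => [->|za].
  by rewrite eirr andbF.
rewrite /=.
case: (z =P u) => [->|zu].
  have := Hb a; have := Ha b.
  have ab' : a != b by apply/eqP.
  have ba' : b != a by rewrite eq_sym.
  have au' : a != u by apply/eqP => H; apply: ua; rewrite H.
  have bu' : b != u by apply/eqP => H; apply: ub; rewrite H.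
  rewrite ab' ba' au' bu' /= => E1 E2.
  by rewrite (esym a u) E2 esym -E1 esym.
have := Hb z; have := Ha z.
have za' : z != a by apply/eqP.
have zb' : z != b by apply/eqP.
have zu' : z != u by apply/eqP.
by rewrite za' zb' zu' /= => <- <-.
Qed.

Definition Wp (T : finType) (e : rel T) (M B : {set T}) :=
  exists x y, [/\ x != y, twins e x y, x \in B, y \in B & (x \notin M) && (y \notin M)].

Lemma W_win (T : finType) (e : rel T) k n M B t :
  Wp e M B -> breaker_wins e k n M B t.
Proof.
move=> [x [y [xy tw xB yB /andP [xM yM]]]].
elim: n M B t xB yB xM yM => [|n IH] M B t xB yB xM yM /=.
  by apply/negP => /resolving_twins /(_ xy tw); rewrite (negbTE xM) (negbTE yM).
case: ifP => Hf.
  by apply/negP => /resolving_twins /(_ xy tw); rewrite (negbTE xM) (negbTE yM).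
case: t.
- apply/forallP => v; apply/implyP => Hv.
  move: Hv; rewrite !inE negb_or => /andP [vM vB].
  apply: IH => //; rewrite in_setU1 negb_or ?xM ?yM andbT;
  apply/eqP => E; [move: xB | move: yB]; rewrite E; apply/negP => //.
- have /set0Pn [v Hv] : ~: (M :|: B) != set0 by rewrite Hf.
  apply/existsP; exists v; rewrite Hv /=; apply: IH => //; by rewrite in_setU1 ?xB ?yB orbT.
Qed.

Lemma free_addM (T : finType) (M B : {set T}) v :
  freeS (v |: M) B = freeS M B :\ v.
Proof. apply/setP => z; rewrite !inE. by case: (z == v); case: (z \in M); case: (z \in B). Qed.

Lemma free_addB (T : finType) (M B : {set T}) v :
  freeS M (v |: B) = freeS M B :\ v.
Proof. apply/setP => z; rewrite !inE. by case: (z == v); case: (z \in M); case: (z \in B). Qed.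

Lemma strategy (T : finType) (e : rel T) k (PM PB : {set T} -> {set T} -> Prop) :
 (forall M B, PM M B -> exists v, v \in freeS M B) ->
 (forall M B v, PM M B -> v \in freeS M B -> PB (v |: M) B) ->
 (forall M B, PB M B -> exists2 v, v \in freeS M B & (Wp e M (v |: B) \/ PM M (v |: B))) ->
 forall n M B, #|freeS M B| <= n ->
   (PM M B -> breaker_wins e k n M B true) /\ (PB M B -> breaker_wins e k n M B false).
Proof.
move=> H1 H2 H3; elim=> [|n IH] M B Hn.
  split => HP.
  - have [v Hv] := H1 _ _ HP.
    have : 0 < #|freeS M B| by apply/card_gt0P; exists v.
    lia.
  - have [v Hv _] := H3 _ _ HP.
    have : 0 < #|freeS M B| by apply/card_gt0P; exists v.
    lia.
have Hcard : forall v, v \in freeS M B -> #|freeS M B :\ v| <= n.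
  move=> v Hv; have := cardsD1 v (freeS M B); rewrite Hv; lia.
split => HP /=.
- have [v0 Hv0] := H1 _ _ HP.
  have -> : (~: (M :|: B) == set0) = false.
    by apply/negbTE/set0Pn; exists v0.
  apply/forallP => v; apply/implyP => Hv.
  apply: (IH _ _ _).2; first by rewrite free_addM; exact: Hcard.
  exact: H2.
- have [v Hv HW] := H3 _ _ HP.
  have -> : (~: (M :|: B) == set0) = false.
    by apply/negbTE/set0Pn; exists v.
  apply/existsP; exists v; rewrite Hv /=.
  case: HW => [HW|HM]; first exact: W_win.
  apply: (IH _ _ _).1 => //; rewrite free_addB; exact: Hcard.
Qed.

Definition fc (T : finType) (C M B : {set T}) := #|C :&: freeS M B|.
Definition bc (T : finType) (C M B : {set T}) := exists x, [/\ x \in C, x \in B & x \notin M].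
Definition pw (T : finType) (e : rel T) (C : {set T}) := forall a b, a \in C -> b \in C -> twins e a b.

Lemma fc_del (T : finType) (C F : {set T}) v :
  #|C :&: F| = (v \in C :&: F) + #|C :&: (F :\ v)|.
Proof.
have -> : C :&: (F :\ v) = (C :&: F) :\ v.
  apply/setP => z; rewrite !inE. by case: (z == v); case: (z \in C); case: (z \in F).
exact: cardsD1.
Qed.

Lemma fc_maker (T : finType) (C M B : {set T}) v :
  fc C M B <= (fc C (v |: M) B).+1 /\ (v \notin C -> fc C (v |: M) B = fc C M B).
Proof.
rewrite /fc free_addM (fc_del C (freeS M B) v).
split; first by case: (v \in _).
by move=> vC; rewrite inE (negbTE vC).
Qed.

Lemma bc_maker (T : finType) (C M B : {set T}) v :
  v \in freeS M B -> bc C M B -> bc C (v |: M) B.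
Proof.
rewrite !inE negb_or => /andP [_ vB] [x [xC xB xM]].
exists x; split => //; rewrite in_setU1 negb_or xM andbT.
by apply/eqP => E; move: vB; rewrite -E xB.
Qed.

Lemma pick_fc (T : finType) (C M B : {set T}) :
  0 < fc C M B -> exists2 y, y \in C & y \in freeS M B.
Proof.
rewrite /fc => /card_gt0P [y]; rewrite inE => /andP [H1 H2]; by exists y.
Qed.

Lemma take_win (T : finType) (e : rel T) (C M B : {set T}) :
  pw e C -> bc C M B -> 0 < fc C M B -> exists2 y, y \in freeS M B & Wp e M (y |: B).
Proof.
move=> Hpw [x [xC xB xM]] /pick_fc [y yC yF].
exists y => //; exists x, y; split.
- apply/eqP => E; move: yF; rewrite -E !inE xB; by case: (x \in M).
- exact: Hpw.
- by rewrite in_setU1 xB orbT.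
- by rewrite in_setU1 eqxx.
- move: yF; rewrite !inE negb_or xM => /andP [-> _] //.
Qed.

Lemma take_claim (T : finType) (C M B : {set T}) :
  0 < fc C M B -> exists2 y, y \in freeS M B & bc C M (y |: B) /\ fc C M B = (fc C M (y |: B)).+1.
Proof.
move=> /pick_fc [y yC yF]; exists y => //; split.
- exists y; split => //; first by rewrite in_setU1 eqxx.
  by move: yF; rewrite !inE negb_or => /andP [].
- rewrite /fc free_addB (fc_del C (freeS M B) y) inE yC yF; lia.
Qed.

Lemma outcomeB (T : finType) (e : rel T) k :
  breaker_wins_first e k -> breaker_wins_second e k -> outcome_Rk e k = Outcome_B.
Proof.
move=> H1 H2; rewrite /outcome_Rk.
have -> : maker_wins_first e k = false.
  by move: H2; rewrite /breaker_wins_second bw_mw /maker_wins_first; case: maker_wins.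
by rewrite /= H1 H2.
Qed.

Lemma start_wins (T : finType) (e : rel T) k (PM PB : {set T} -> {set T} -> Prop) :
 (forall M B, PM M B -> exists v, v \in freeS M B) ->
 (forall M B v, PM M B -> v \in freeS M B -> PB (v |: M) B) ->
 (forall M B, PB M B -> exists2 v, v \in freeS M B & (Wp e M (v |: B) \/ PM M (v |: B))) ->
 PM set0 set0 -> PB set0 set0 -> outcome_Rk e k = Outcome_B.
Proof.
move=> H1 H2 H3 HM HB.
have := @strategy T e k PM PB H1 H2 H3 #|T| set0 set0 (max_card _).
case=> A1 A2; apply: outcomeB; [exact: A2 | exact: A1].
Qed.

Lemma fc0 (T : finType) (C : {set T}) : fc C set0 set0 = #|C|.
Proof. by rewrite /fc /freeS setU0 setC0 setIT. Qed.

Lemma bc_B (T : finType) (C M B : {set T}) v : bc C M B -> bc C M (v |: B).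
Proof. by move=> [x [xC xB xM]]; exists x; split => //; rewrite in_setU1 xB orbT. Qed.

Lemma pw_class (T : finType) (e : rel T) u :
  symmetric e -> irreflexive e -> pw e (twin_class e u).
Proof.
move=> es ei a b; rewrite !inE => ha hb; exact: (twins_trans es ei ha hb).
Qed.

Lemma case_a (T : finType) (e : rel T) k (C : {set T}) :
  pw e C -> 4 <= #|C| -> outcome_Rk e k = Outcome_B.
Proof.
move=> Hpw HC.
apply: (@start_wins T e k
  (fun M B => (bc C M B /\ 2 <= fc C M B) \/ 4 <= fc C M B)
  (fun M B => (bc C M B /\ 1 <= fc C M B) \/ 3 <= fc C M B)).
- move=> M B H. have : 0 < fc C M B by case: H => [[_ ?]|?]; lia.
  by move/pick_fc => [y _ ?]; exists y.
- move=> M B v H Hv. have [F1 _] := fc_maker C M B v.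
  case: H => [[hb hf]|hf]; [left; split; [exact: bc_maker | lia] | right; lia].
- move=> M B [[hb hf]|hf].
  + have [y Hy HW] := take_win Hpw hb hf; exists y => //; by left.
  + have [|y Hy [hb E]] := @take_claim T C M B; first lia.
    exists y => //; right; left; split => //; lia.
- right; rewrite fc0; lia.
- right; rewrite fc0; lia.
Qed.

Lemma case_b (T : finType) (e : rel T) k (C1 C2 : {set T}) :
  pw e C1 -> pw e C2 -> (forall x, x \in C1 -> x \notin C2) ->
  3 <= #|C1| -> 3 <= #|C2| -> outcome_Rk e k = Outcome_B.
Proof.
move=> P1 P2 D H1 H2.
apply: (@start_wins T e k
  (fun M B => (bc C1 M B /\ 2 <= fc C1 M B) \/ (bc C2 M B /\ 2 <= fc C2 M B) \/
                  [/\ bc C1 M B, (1 <= fc C1 M B) & (3 <= fc C2 M B)] \/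
                  [/\ bc C2 M B, (1 <= fc C2 M B) & (3 <= fc C1 M B)] \/
                  (3 <= fc C1 M B /\ 3 <= fc C2 M B))
  (fun M B => [\/ bc C1 M B /\ 1 <= fc C1 M B, bc C2 M B /\ 1 <= fc C2 M B,
                  3 <= fc C1 M B | 3 <= fc C2 M B])).
- move=> M B H.
  have : 0 < fc C1 M B \/ 0 < fc C2 M B.
    by case: H => [[_ ?]|[[_ ?]|[[_ ? _]|[[_ ? _]|[? _]]]]]; lia.
  by case=> /pick_fc [y _ ?]; exists y.
- move=> M B v H Hv.
  have [F1 G1] := fc_maker C1 M B v.
  have [F2 G2] := fc_maker C2 M B v.
  case: H => [[hb hf]|[[hb hf]|[[hb hf1 hf2]|[[hb hf2 hf1]|[hf1 hf2]]]]].
  + apply: Or41; split; [exact: bc_maker | lia].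
  + apply: Or42; split; [exact: bc_maker | lia].
  + case: (boolP (v \in C1)) => vC1.
    * apply: Or44; rewrite G2 //; exact: D.
    * apply: Or41; split; [exact: bc_maker | rewrite G1 //].
  + case: (boolP (v \in C2)) => vC2.
    * apply: Or43; rewrite G1 //; apply/negP => /D; by rewrite vC2.
    * apply: Or42; split; [exact: bc_maker | rewrite G2 //].
  + case: (boolP (v \in C1)) => vC1.
    * apply: Or44; rewrite G2 //; exact: D.
    * apply: Or43; rewrite G1 //.
- move=> M B [[hb hf]|[hb hf]|hf|hf].
  + have [y Hy HW] := take_win P1 hb hf; exists y => //; by left.
  + have [y Hy HW] := take_win P2 hb hf; exists y => //; by left.
  + have [|y Hy [hb E]] := @take_claim T C1 M B; first lia.
    exists y => //; right; left; split => //; lia.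
  + have [|y Hy [hb E]] := @take_claim T C2 M B; first lia.
    exists y => //; right; right; left; split => //; lia.
- do 4 right; rewrite !fc0; lia.
- apply: Or43; rewrite !fc0; lia.
Qed.

Theorem corollary2p8 (T : finType) (e : rel T) (k : nat) :
  0 < k ->
  symmetric e -> irreflexive e ->
  (forall x y : T, connect e x y) ->
  4 <= #|T| ->
  ((exists u : T, 4 <= #|twin_class e u|) -> outcome_Rk e k = Outcome_B) /\
  ((exists u v : T, twin_class e u != twin_class e v /\
       #|twin_class e u| = 3 /\ #|twin_class e v| = 3) ->
     outcome_Rk e k = Outcome_B).
Proof.
move=> _ es ei _ _; split.
- move=> [u Hu]; exact: (case_a k (@pw_class _ _ u es ei) Hu).
- move=> [u [v [Huv [Hu Hv]]]].
  apply: (case_b k (@pw_class _ _ u es ei) (@pw_class _ _ v es ei)); [|by rewrite Hu|by rewrite Hv].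
  move=> x; rewrite !inE => hux; apply/negP => hvx.
  move/eqP: Huv; apply; apply/setP => y; rewrite !inE.
  have hxv : twins e x v by rewrite twins_sym.
  have hxu : twins e x u by rewrite twins_sym.
  apply/idP/idP => H.
  + exact: (twins_trans es ei hxv (twins_trans es ei hux H)).
  + exact: (twins_trans es ei hxu (twins_trans es ei hvx H)).
Qed.
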